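(* Let $G=(V,E)$ be a simple undirected graph with $V=[n]$, let $N=\binom n2$, and enumerate $\mathcal P_n=\{(i,j):1\le i<j\le n\}$ as $(i_k,j_k)$, $k\in[N]$. Let $U=[u_1,\dots,u_n]\in\mathrm{Lab}(G)$, $K=U^\top U$, and let $\tilde U\in\mathbb R^{d^2\times N}$ be the Kronecker product embedding of the node pairs, with $k$-th column $\tilde u_k=u_{i_k}\otimes u_{j_k}$. Let $C>0$ and $\mathcal H_{\tilde U}=\{w\mid w=\tilde U\beta,\ \beta\in\mathbb R^N,\ \|\beta\|_\infty\le C\}$. Then for any $p\in(0,1/2]$, $$R(\mathcal H_{\tilde U},\tilde U,p)\le C\lambda_1(K)\sqrt{2p},$$ where $\lambda_1(K)$ is the largest eigenvalue of $K$.
   Context: $\mathrm{Lab}(G)$ (orthonormal representations) is the set of matrices $U=[u_1,\dots,u_n]\in\mathbb R^{d\times n}$ (any $d$) with $\|u_i\|_2=1$ for all $i$ and $u_i^\top u_j=0$ whenever $i\ne j$ and $(i,j)\notin E$. $\otimes$ denotes the Kronecker product. Transductive Rademacher complexity: $R(\mathcal H,\tilde U,p)=\frac1N\mathbb E_\gamma\big[\sup_{h\in\mathcal H}\sum_{k=1}^N\gamma_k h^\top\tilde u_k\big]$, with $\gamma_k$ i.i.d. taking values $+1,-1,0$ with probabilities $p,p,1-2p$. *)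

(* Defs.v *)
From HB Require Import structures.
From mathcomp Require Import all_boot all_order all_algebra.
From mathcomp Require Import boolp classical_sets reals.
Set Implicit Arguments. Unset Strict Implicit. Unset Printing Implicit Defensive.
Import Order.TTheory GRing.Theory Num.Theory.
Local Open Scope ring_scope.
Local Open Scope classical_set_scope.

Definition pairs (n : nat) := {p : 'I_n * 'I_n | (p.1 < p.2)%N}.

Definition simple_graph (n : nat) (e : rel 'I_n) :=
  symmetric e /\ irreflexive e.

Definition Lab (R : realType) (n d : nat) (e : rel 'I_n) (U : 'M[R]_(d, n)) :=
  (forall i, ((col i U)^T *m col i U) 0 0 = 1) /\
  (forall i j, i != j -> ~~ e i j -> ((col i U)^T *m col j U) 0 0 = 0).

(* Kronecker product of column vectors: (u (x) v)_{a*d'+b} = u_a v_b. *)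
Definition kron (R : realType) (d d' : nat) (u : 'cV[R]_d) (v : 'cV[R]_d')
  : 'cV[R]_(d * d') := (mxvec (u *m v^T))^T.

Definition Ut (R : realType) (n d : nat) (U : 'M[R]_(d, n)) (k : pairs n)
  : 'cV[R]_(d * d) := kron (col (val k).1 U) (col (val k).2 U).

Definition H_Ut (R : realType) (n d : nat) (U : 'M[R]_(d, n)) (C : R)
  : set 'cV[R]_(d * d) :=
  [set w | exists beta : pairs n -> R,
      (forall k, `|beta k| <= C) /\ w = \sum_k beta k *: Ut U k].

(* Rademacher-type variables: values +1, -1, 0 with probs p, p, 1-2p. *)
Definition gval (R : realType) (t : 'I_3) : R :=
  if val t == 0%N then 1 else if val t == 1%N then -1 else 0.
Definition gprob (R : realType) (p : R) (t : 'I_3) : R :=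
  if (val t < 2)%N then p else 1 - 2 * p.

(* Transductive Rademacher complexity R(H, Ut, p), for a family of columns
   ut indexed by a finite type I (N = #|I|); expectation over the i.i.d.
   gamma_k written as the finite sum over all outcomes. *)
Definition trans_rademacher (R : realType) (I : finType) (m : nat)
  (H : set 'cV[R]_m) (ut : I -> 'cV[R]_m) (p : R) : R :=
  (#|I|%:R)^-1 *
  \sum_(g : {ffun I -> 'I_3})
     (\prod_k gprob p (g k)) *
     sup [set (\sum_k gval R (g k) * (h^T *m ut k) 0 0) | h in H].

Definition lambda1 (R : realType) (n : nat) (K : 'M[R]_n) : R :=
  sup [set a : R | eigenvalue K a].

(* Main.v *)
Require Import Defs.
From HB Require Import structures.
From mathcomp Require Import all_boot all_order all_algebra.
From mathcomp Require Import boolp classical_sets reals.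
From mathcomp Require Import all_classical all_reals all_analysis.
From mathcomp Require Import ring lra.
Import Order.TTheory GRing.Theory Num.Theory.
Import numFieldNormedType.Exports.
Local Open Scope ring_scope.
Set Implicit Arguments. Unset Strict Implicit. Unset Printing Implicit Defensive.

Section Quad.
Local Open Scope classical_set_scope.
Variable R : realType.

Definition dotv m (x y : 'rV[R]_m) : R := (x *m y^T) 0 0.
Definition sqn m (x : 'rV[R]_m) : R := dotv x x.

Lemma dotE m (x y : 'rV[R]_m) : dotv x y = \sum_i x 0 i * y 0 i.
Proof. by rewrite /dotv mxE; apply: eq_bigr => i _; rewrite mxE. Qed.

Lemma sqE m (x : 'rV[R]_m) : sqn x = \sum_i x 0 i ^+ 2.
Proof. by rewrite /sqn dotE; apply: eq_bigr => i _; rewrite expr2. Qed.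

Lemma sq_ge0 m (x : 'rV[R]_m) : 0 <= sqn x.
Proof. by rewrite sqE; apply: sumr_ge0 => i _; rewrite sqr_ge0. Qed.

Lemma sq_coord m (x : 'rV[R]_m) i : x 0 i ^+ 2 <= sqn x.
Proof.
rewrite sqE (bigD1 i) //= lerDl; apply: sumr_ge0 => j _; exact: sqr_ge0.
Qed.

Lemma sq_eq0 m (x : 'rV[R]_m) : sqn x = 0 -> x = 0.
Proof.
rewrite sqE => /eqP; rewrite psumr_eq0 => [/allP H|i _]; last exact: sqr_ge0.
apply/rowP => i; rewrite mxE; have := H i (mem_index_enum _).
by rewrite /= sqrf_eq0 => /eqP.
Qed.

Lemma dotC m (x y : 'rV[R]_m) : dotv x y = dotv y x.
Proof. by rewrite !dotE; apply: eq_bigr => i _; rewrite mulrC. Qed.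

Lemma dotDl m (x y z : 'rV[R]_m) : dotv (x + y) z = dotv x z + dotv y z.
Proof. by rewrite /dotv mulmxDl mxE. Qed.

Lemma dotZl m a (x z : 'rV[R]_m) : dotv (a *: x) z = a * dotv x z.
Proof. by rewrite /dotv -scalemxAl mxE. Qed.

Lemma dotBl m (x y z : 'rV[R]_m) : dotv (x - y) z = dotv x z - dotv y z.
Proof. by rewrite /dotv mulmxBl !mxE. Qed.

Lemma dotDr m (x y z : 'rV[R]_m) : dotv z (x + y) = dotv z x + dotv z y.
Proof. by rewrite dotC dotDl !(dotC z). Qed.

Lemma dotZr m a (x z : 'rV[R]_m) : dotv z (a *: x) = a * dotv z x.
Proof. by rewrite dotC dotZl dotC. Qed.

Lemma sqZ m a (x : 'rV[R]_m) : sqn (a *: x) = a ^+ 2 * sqn x.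
Proof. by rewrite /sqn dotZl dotZr mulrA expr2. Qed.

Lemma sq_expand m (x y : 'rV[R]_m) t :
  sqn (x + t *: y) = sqn x + 2 * t * dotv x y + t ^+ 2 * sqn y.
Proof.
rewrite /sqn dotDl !dotDr !dotZl !dotZr (dotC y x); ring.
Qed.

Lemma dot_mul m k (x y : 'rV[R]_m) (A : 'M[R]_(m, k)) :
  dotv (x *m A) (y *m A) = dotv (x *m (A *m A^T)) y.
Proof. by rewrite /dotv trmx_mul !mulmxA. Qed.


Lemma cont_sumf m (I : finType) (F : I -> 'rV[R]_m -> R) :
  (forall i, continuous (F i)) -> continuous (fun y => \sum_i F i y).
Proof.
move=> H; rewrite unlock /=; elim: (index_enum I) => [|a s IH] /=.
  by apply: cst_continuous.
by move=> y; apply: (@continuousD _ _ _ (F a) (fun y => _)); [exact: H|exact: IH].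
Qed.

Lemma cont_sq m k (L : 'rV[R]_m -> 'rV[R]_k) :
  (forall j, continuous (fun y => L y 0 j)) -> continuous (fun y => sqn (L y)).
Proof.
move=> H; have -> : (fun y => sqn (L y)) = (fun y => \sum_j (L y 0 j * L y 0 j)).
  by apply: funext => y; rewrite /sqn dotE.
apply: cont_sumf => j y.
by apply: (@continuousM _ _ (fun y => L y 0 j) (fun y => L y 0 j)); exact: H.
Qed.

Lemma cont_mul m k (U : 'M[R]_(m, k)) j : continuous (fun y : 'rV[R]_m => (y *m U) 0 j).
Proof.
have -> : (fun y : 'rV[R]_m => (y *m U) 0 j) = (fun y => \sum_a (y 0 a * U a j)).
  by apply: funext => y; rewrite mxE.
apply: cont_sumf => a y.
apply: (@continuousM _ _ (fun y : 'rV[R]_m => y 0 a) (fun _ => U a j)).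
  exact: coord_continuous.
exact: cst_continuous.
Qed.

Lemma sphere_max m k (U : 'M[R]_(m, k)) :
  (exists y0 : 'rV[R]_m, sqn y0 = 1) ->
  exists2 c : 'rV[R]_m, sqn c = 1 &
    forall y, sqn y = 1 -> sqn (y *m U) <= sqn (c *m U).
Proof.
move=> [y0 Hy0].
pose A := [set y : 'rV[R]_m | sqn y = 1].
have cA : compact A.
  apply: (@subclosed_compact _ A [set v : 'rV[R]_m | forall i, `[(-1 : R), 1]%classic (v ord0 i)]).
  - have -> : A = (fun y => sqn y) @^-1` [set x | x = 1] by [].
    apply: (proj1 (continuous_closedP _)); last exact: closed_eq.
    by apply: (@cont_sq _ _ id) => j; exact: coord_continuous.
  - apply: (@rV_compact _ m (fun _ => `[(-1 : R), 1]%classic)) => i; exact: segment_compact.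
  - move=> y Ay i /=; rewrite in_itv /= -ler_norml.
    have := sq_coord y i; rewrite Ay => H.
    rewrite -(@ler_pXn2r _ 2) ?nnegrE ?normr_ge0 ?ler01 // expr1n real_normK ?num_real //.
    idtac.
have [c cAc cmax] := @compact_EVT_max _ _ (fun y : 'rV[R]_m => sqn (y *m U)) A (ex_intro _ y0 Hy0) cA
   (continuous_subspaceT (@cont_sq _ _ (fun y : 'rV[R]_m => y *m U) (@cont_mul _ _ U))).
exists c; first by move: cAc; rewrite inE.
by move=> y Ay; apply: cmax; rewrite inE.
Qed.

Lemma sqn0 m : sqn (0 : 'rV[R]_m) = 0.
Proof. by rewrite /sqn /dotv mul0mx mxE. Qed.

Lemma sphere_eig m k (U : 'M[R]_(m, k)) c :
  sqn c = 1 -> (forall y, sqn y = 1 -> sqn (y *m U) <= sqn (c *m U)) ->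
  (forall y, sqn (y *m U) <= sqn (c *m U) * sqn y) /\
  c *m (U *m U^T) = sqn (c *m U) *: c.
Proof.
move=> c1 cmax; set mu := sqn (c *m U).
have hom : forall y, sqn (y *m U) <= mu * sqn y.
  move=> y; have [y0|ypos] := eqVneq (sqn y) 0.
    by rewrite y0 (sq_eq0 y0) mul0mx sqn0 mulr0.
  have sp : 0 < sqn y by rewrite lt_def ypos sq_ge0.
  pose t := Num.sqrt (sqn y).
  have t2 : t ^+ 2 = sqn y by rewrite sqr_sqrtr // ltW.
  have tp : 0 < t by rewrite sqrtr_gt0.
  have := cmax (t^-1 *: y); rewrite sqZ -scalemxAl sqZ exprVn t2 mulVf //.
  move=> /(_ erefl); rewrite mulrC -ler_pdivlMr ?invr_gt0 //.
  by rewrite invrK mulrC.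
split => //.
pose w := c *m (U *m U^T) - mu *: c.
suff : sqn w = 0 by move/sq_eq0/eqP; rewrite subr_eq0 => /eqP.
set S := sqn w; set B := sqn (w *m U) - mu * sqn w.
have B0 : B <= 0 by rewrite /B subr_le0.
have S0 : 0 <= S by exact: sq_ge0.
have key : forall t, 2 * t * S + t ^+ 2 * B <= 0.
  move=> t; have := hom (c + t *: w).
  rewrite mulmxDl -scalemxAl !sq_expand c1 dot_mul.
  have -> : dotv (c *m (U *m U^T)) w = S + mu * dotv c w.
    by rewrite /S /sqn /w dotBl dotZl; ring.
  rewrite -/mu /B => H; lra.
pose t := S / (1 - B).
have hB : 0 < 1 - B by lra.
have tS : t * (1 - B) = S by rewrite /t mulfVK // gt_eqF.
have t0 : 0 <= t by rewrite /t divr_ge0 // ltW.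
have := key t => H.
have tB : t ^+ 2 * B = t * t - t * S.
  by rewrite -tS; ring.
rewrite tB in H.
have tt : t * t + t * S <= 0 by lra.
have : t = 0 by nra.
by move=> tz; apply/eqP; rewrite eq_le S0 andbT -tS tz mul0r.
Qed.
End Quad.

Section Sums.
Variable R : realType.

Lemma sum_inj_le (I J : finType) (h : J -> I) (F : I -> R) :
  injective h -> (forall i, 0 <= F i) -> \sum_j F (h j) <= \sum_i F i.
Proof.
move=> hi F0.
rewrite -(big_imset (A := [pred j | true]) _ (in2W hi)) /=.
rewrite [leRHS](bigID (fun i => i \in [set h x | x in [pred j | true]])) /=.
by rewrite lerDl sumr_ge0.
Qed.

Lemma prod_sum_ffun (I : finType) (F : I -> 'I_3 -> R) :
  \sum_(g : {ffun I -> 'I_3}) \prod_k F k (g k) = \prod_k \sum_t F k t.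
Proof. by rewrite bigA_distr_bigA. Qed.

Lemma sum3 (F : 'I_3 -> R) : \sum_t F t = F ord0 + F (inord 1) + F (inord 2).
Proof.
rewrite !big_ord_recl big_ord0 addr0 addrA; congr (_ + _ + _); congr F; apply: val_inj => //=;
  by rewrite inordK.
Qed.

Lemma prod_if1 (I : finType) (k : I) (X : I -> R) :
  \prod_i (if i == k then X i else 1) = X k.
Proof. by rewrite -big_mkcond big_pred1_eq. Qed.

End Sums.

Section Prob.
Variables (R : realType) (I : finType) (p : R).
Hypotheses (p0 : 0 < p) (p1 : p <= 1 / 2).

Definition Pg (g : {ffun I -> 'I_3}) : R := \prod_k gprob p (g k).

Lemma p2 : 2 * p <= 1.
Proof. by rewrite -ler_pdivlMl // mulrC. Qed.

Lemma gprob_ge0 t : 0 <= gprob p t.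
Proof. have := p2; rewrite /gprob; case: ifP => _ h; [exact: ltW | lra]. Qed.

Lemma Pg_ge0 g : 0 <= Pg g.
Proof. by apply: prodr_ge0 => k _; exact: gprob_ge0. Qed.

Lemma gval3 (F : R -> R) :
  \sum_t gprob p t * F (gval R t) = p * F 1 + p * F (-1) + (1 - 2 * p) * F 0.
Proof. by rewrite sum3 /gprob /gval /= !inordK. Qed.

Lemma Pg_sum1 : \sum_g Pg g = 1.
Proof.
rewrite /Pg (prod_sum_ffun (fun _ t => gprob p t)); apply: big1 => k _.
have := gval3 (fun _ => 1); rewrite !mulr1.
under [X in X = _ -> _]eq_bigr do rewrite mulr1.
by move=> ->; ring.
Qed.

Lemma Pg_cov k k' :
  \sum_g Pg g * (gval R (g k) * gval R (g k')) = if k == k' then 2 * p else 0.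
Proof.
pose F i t := gprob p t * ((if i == k then gval R t else 1) * (if i == k' then gval R t else 1)).
have E : forall g : {ffun I -> 'I_3}, Pg g * (gval R (g k) * gval R (g k')) = \prod_i F i (g i).
  move=> g; rewrite /F /Pg big_split /= big_split /=.
  by rewrite (prod_if1 k (fun i => gval R (g i))) (prod_if1 k' (fun i => gval R (g i))).
under eq_bigr do rewrite E.
rewrite (prod_sum_ffun F) (bigD1 k) //=.
have o : forall i, i != k -> i != k' -> \sum_t F i t = 1.
  move=> i ik ik'; rewrite /F (negbTE ik) (negbTE ik').
  under eq_bigr do rewrite !mulr1.
  have := gval3 (fun _ => 1); rewrite !mulr1.
  under [X in X = _ -> _]eq_bigr do rewrite mulr1.
  by move=> ->; ring.
case: (eqVneq k k') => [kk|kk'].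
  subst k'.
  rewrite [X in _ * X]big1 ?mulr1; last by move=> i ik; exact: (o i ik ik).
  rewrite /F eqxx.
  by rewrite (gval3 (fun x => x * x)); ring.
rewrite /F eqxx (negbTE kk').
under [X in X * _]eq_bigr do rewrite mulr1.
rewrite (gval3 (fun x => x)).
have -> : p * 1 + p * -1 + (1 - 2 * p) * 0 = 0 by ring.
by rewrite mul0r.
Qed.

End Prob.

Lemma cs_exp (R : realType) (J : finType) (P X : J -> R) :
  (forall j, 0 <= P j) -> \sum_j P j = 1 ->
  (\sum_j P j * `|X j|) ^+ 2 <= \sum_j P j * X j ^+ 2.
Proof.
move=> P0 P1; set m := \sum_j P j * `|X j|.
have H : 0 <= \sum_j P j * (`|X j| - m) ^+ 2.
  by apply: sumr_ge0 => j _; rewrite mulr_ge0 ?sqr_ge0.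
have E : \sum_j P j * (`|X j| - m) ^+ 2 =
   \sum_j P j * X j ^+ 2 + (- (2 * m) * m + m ^+ 2 * 1).
  transitivity (\sum_j (P j * X j ^+ 2 + (- (2 * m) * (P j * `|X j|) + m ^+ 2 * P j))).
    apply: eq_bigr => j _; rewrite -[X j ^+ 2]real_normK ?num_real; ring.
  by rewrite big_split big_split /= -!mulr_sumr P1.
rewrite E in H; lra.
Qed.

Section Main.
Variables (R : realType) (n d : nat) (U : 'M[R]_(d, n)).

Definition Kf a b := (U^T *m U) a b.
Definition uv a : 'rV[R]_d := (col a U)^T.
Definition Gf (l k : pairs n) := ((Ut U l)^T *m Ut U k) 0 0.

Lemma KfE a b : Kf a b = \sum_i U i a * U i b.
Proof. by rewrite /Kf mxE; apply: eq_bigr => i _; rewrite mxE. Qed.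

Lemma uvU a b : (uv a *m U) 0 b = Kf a b.
Proof. by rewrite KfE mxE; apply: eq_bigr => i _; rewrite !mxE. Qed.

Lemma Gf_eq l k : Gf l k = Kf (val l).1 (val k).1 * Kf (val l).2 (val k).2.
Proof.
rewrite /Gf mxE.
rewrite (reindex (uncurry (@mxvec_index d d))) /=; last first.
  exact: (@curry_mxvec_bij d d).
transitivity (\sum_(j : 'I_d * 'I_d) (fun a b => (Ut U l)^T 0 (mxvec_index a b) * Ut U k (mxvec_index a b) 0) j.1 j.2).
  by apply: eq_bigr => -[a b].
rewrite -(pair_bigA _ (fun a b => (Ut U l)^T 0 (mxvec_index a b) * Ut U k (mxvec_index a b) 0)) /=.
rewrite !KfE mulr_suml; apply: eq_bigr => a _; rewrite mulr_sumr; apply: eq_bigr => b _.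
rewrite /Ut /kron !mxE !mxvecE !mxE !big_ord1 !mxE; ring.
Qed.

Hypothesis unit : forall i, ((col i U)^T *m col i U) 0 0 = 1.

Lemma sq_uv a : sqn (uv a) = 1.
Proof. by rewrite /sqn /dotv /uv trmxK unit. Qed.

Lemma Kaa a : Kf a a = 1.
Proof. by rewrite -uvU -[RHS](unit a) !mxE; apply: eq_bigr => i _; rewrite !mxE. Qed.

Variable a0 : 'I_n.

Lemma spec_facts : exists mu, [/\ 1 <= mu, mu <= lambda1 (U^T *m U) &
  forall a, \sum_b Kf a b ^+ 2 <= mu].
Proof.
have [c c1 cmax] := sphere_max U (ex_intro _ (uv a0) (sq_uv a0)).
have [hom eigeq] := sphere_eig c1 cmax.
set mu := sqn (c *m U) in hom eigeq.
have rowb : forall a, \sum_b Kf a b ^+ 2 = sqn (uv a *m U).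
  by move=> a; rewrite sqE; apply: eq_bigr => b _; rewrite uvU.
have mu1 : 1 <= mu.
  apply: le_trans (cmax _ (sq_uv a0)).
  by apply: le_trans (sq_coord _ a0); rewrite uvU Kaa expr1n.
have eig_mu : eigenvalue (U^T *m U) mu.
  apply/eigenvalueP; exists (c *m U).
    by rewrite !mulmxA -(mulmxA c) eigeq -scalemxAl.
  apply/negP => /eqP v0; move: mu1; rewrite /mu v0 sqn0; lra.
have eig_le : forall a, eigenvalue (U^T *m U) a -> a <= mu.
  move=> a /eigenvalueP [v va v0].
  have sp : 0 < sqn v.
    rewrite lt_def sq_ge0 andbT; apply/negP => /eqP /sq_eq0 h; by rewrite h eqxx in v0.
  have := hom (v *m U^T).
  rewrite -mulmxA va sqZ /sqn dot_mul trmxK va dotZl -/(sqn v) => h.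
  have h2 : a * (a - mu) * sqn v <= 0 by lra.
  have h3 : a * (a - mu) <= 0.
    by rewrite -(pmulr_lle0 _ sp).
  nra.
exists mu; split => //.
  have hs : has_sup [set a : R | eigenvalue (U^T *m U) a].
    by split; [exists mu | exists mu => y; exact: eig_le].
  exact: (sup_upper_bound hs).
by move=> a; rewrite rowb; apply: le_trans (hom _) _; rewrite sq_uv mulr1.
Qed.

Lemma G_row (mu : R) : (forall a, \sum_b Kf a b ^+ 2 <= mu) ->
  forall l, \sum_k Gf l k ^+ 2 <= mu ^+ 2.
Proof.
move=> rb l.
under eq_bigr do rewrite Gf_eq.
set i := (val l).1; set j := (val l).2.
pose F (x : 'I_n * 'I_n) := (Kf i x.1 * Kf j x.2) ^+ 2.
have E : \sum_(k : pairs n) (Kf (val l).1 (val k).1 * Kf (val l).2 (val k).2) ^+ 2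
   = \sum_(k : pairs n) F (val k) by [].
rewrite E; apply: le_trans (sum_inj_le (F := F) (@val_inj _ _ (pairs n)) (fun x => sqr_ge0 _)) _.
rewrite /F -(pair_bigA _ (fun x y => (Kf i x * Kf j y) ^+ 2)) /=.
have -> : \sum_x1 \sum_x2 (Kf i x1 * Kf j x2) ^+ 2 =
   (\sum_x1 Kf i x1 ^+ 2) * (\sum_x2 Kf j x2 ^+ 2).
  rewrite mulr_suml; apply: eq_bigr => x1 _; rewrite mulr_sumr.
  by apply: eq_bigr => x2 _; rewrite exprMn.
rewrite expr2; apply: ler_pM => //; apply: sumr_ge0 => x _; exact: sqr_ge0.
Qed.
End Main.

Local Open Scope classical_set_scope.

Theorem lemma1 (R : realType) (n d : nat) (e : rel 'I_n)
  (U : 'M[R]_(d, n)) (C p : R) :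
  simple_graph e -> Lab e U -> 0 < C -> 0 < p -> p <= 1 / 2 ->
  trans_rademacher (H_Ut U C) (Ut U) p
    <= C * lambda1 (U^T *m U) * Num.sqrt (2 * p).
Proof.
move=> _ [unit _] C0 p0 p1.
move: U e unit; case: n => [|n] U e unit.
  rewrite /trans_rademacher.
  have -> : #|{: pairs 0}| = 0%N by apply: eq_card0 => -[[[x hx] y] h].
  rewrite invr0 mul0r /lambda1.
  have -> : [set a : R | eigenvalue (U^T *m U) a] = set0.
    apply/seteqP; split => a //= /eigenvalueP [v _].
    by rewrite (thinmx0 v) eqxx.
  by rewrite sup0 mulr0 mul0r.
have [mu [mu1 mule rb]] := spec_facts unit ord0.
have gr := G_row rb.
have mu0 : 0 <= mu by lra.
pose X (g : {ffun pairs n.+1 -> 'I_3}) l := \sum_k gval R (g k) * Gf U l k.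
rewrite /trans_rademacher.
set N := #|{: pairs n.+1}|.
have supb : forall g : {ffun pairs n.+1 -> 'I_3},
  sup [set (\sum_k gval R (g k) * (h^T *m Ut U k) 0 0) | h in H_Ut U C]
    <= C * \sum_l `|X g l|.
  move=> g; apply: ge_sup.
    exists (\sum_k gval R (g k) * ((0 : 'cV[R]_(d * d))^T *m Ut U k) 0 0).
    exists 0 => //; exists (fun _ => 0); split.
      by move=> k; rewrite normr0 ltW.
    by rewrite big1 // => k _; rewrite scale0r.
  move=> x [h [beta [bC ->]] <-].
  have E : forall k, ((\sum_l beta l *: Ut U l)^T *m Ut U k) 0 0 = \sum_l beta l * Gf U l k.
    move=> k.
    have -> : (\sum_l beta l *: Ut U l)^T = \sum_l beta l *: (Ut U l)^T.
      by apply/matrixP => i j; rewrite !mxE !summxE; apply: eq_bigr => l _; rewrite !mxE.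
    rewrite mulmx_suml summxE; apply: eq_bigr => l _.
    by rewrite -scalemxAl mxE.
  under eq_bigr do rewrite E mulr_sumr.
  rewrite exchange_big /= mulr_sumr; apply: ler_sum => l _.
  have -> : \sum_k gval R (g k) * (beta l * Gf U l k) = beta l * X g l.
    by rewrite /X mulr_sumr; apply: eq_bigr => k _; ring.
  apply: le_trans (ler_norm _) _; rewrite normrM ler_wpM2r //.
have EX2 : forall l, \sum_g Pg p g * X g l ^+ 2 = 2 * p * \sum_k Gf U l k ^+ 2.
  move=> l.
  transitivity (\sum_g \sum_k \sum_k' (Gf U l k * Gf U l k') *
                  (Pg p g * (gval R (g k) * gval R (g k')))).
    apply: eq_bigr => g _; rewrite /X expr2 mulr_suml mulr_sumr; apply: eq_bigr => k _.
    rewrite mulr_sumr mulr_sumr; apply: eq_bigr => k' _; ring.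
  rewrite exchange_big /=.
  under eq_bigr => k _ do rewrite exchange_big /=.
  under eq_bigr => k _ do under eq_bigr => k' _ do rewrite -mulr_sumr Pg_cov.
  rewrite mulr_sumr; apply: eq_bigr => k _.
  rewrite (bigD1 k) //= eqxx big1 ?addr0; first by rewrite expr2; ring.
  by move=> k' nk; rewrite eq_sym (negbTE nk) mulr0.
have sq2p : 0 <= Num.sqrt (2 * p) by apply: sqrtr_ge0.
have EXb : forall l, \sum_g Pg p g * `|X g l| <= Num.sqrt (2 * p) * mu.
  move=> l.
  rewrite -(@ler_pXn2r _ 2) // ?nnegrE ?mulr_ge0 ?sumr_ge0 // => [|g _]; last first.
    by rewrite mulr_ge0 // (Pg_ge0 p0 p1).
  apply: le_trans (cs_exp _ _ _) _.
  - by move=> g; apply: (Pg_ge0 p0 p1).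
  - exact: Pg_sum1.
  rewrite EX2 exprMn sqr_sqrtr; last by lra.
  by rewrite ler_wpM2l //; lra.
apply: (@le_trans _ _ (N%:R^-1 * \sum_g Pg p g * (C * \sum_l `|X g l|))).
  rewrite ler_wpM2l ?invr_ge0 ?ler0n //; apply: ler_sum => g _.
  by rewrite ler_wpM2l // (Pg_ge0 p0 p1).
have -> : \sum_g Pg p g * (C * \sum_l `|X g l|) = C * \sum_l \sum_g Pg p g * `|X g l|.
  rewrite [in RHS]exchange_big /= mulr_sumr; apply: eq_bigr => g _.
  by rewrite !mulr_sumr; apply: eq_bigr => l _; ring.
have Sb : \sum_l \sum_g Pg p g * `|X g l| <= N%:R * (Num.sqrt (2 * p) * mu).
  apply: le_trans (ler_sum _ (fun l _ => EXb l)) _.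
  by rewrite sumr_const -[X in X <= _]mulr_natl.
have lam1 : 1 <= lambda1 (U^T *m U) by lra.
have [N0|Npos] := eqVneq N 0%N.
  rewrite N0 invr0 mul0r; apply: mulr_ge0 => //; apply: mulr_ge0; lra.
have NR : 0 < N%:R :> R by rewrite ltr0n lt0n.
rewrite mulrCA -mulrA ler_wpM2l ?(ltW C0) //.
rewrite ler_pdivrMl //; apply: le_trans Sb _.
by rewrite ler_wpM2l ?ler0n // mulrC ler_wpM2r.
Qed.
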